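(* Let $\boldsymbol\Gamma_n$ be a Haar-distributed random matrix on $O(n)$ with $n\ge3$, let $1\le p,q\le n$, let $\mathbf Z_n$ be the $p\times q$ upper-left submatrix of $\boldsymbol\Gamma_n$, and let $\lambda_1,\dots,\lambda_q$ be the eigenvalues of $\mathbf Z_n'\mathbf Z_n$. Then $$\mathbb E\sum_{i=1}^q\lambda_i^3=\frac{pq}{n(n+2)(n+4)}\big[p^2+q^2+3pq+3(p+q)+4\big]+\frac{pq(p-1)(q-1)}{(n-1)n(n+2)(n+4)}\Big[\frac{2(p-2)(q-2)}{n-2}-3(p+q)\Big].$$ *)

(* Defs.v *)
From HB Require Import structures.
From mathcomp Require Import all_boot all_order all_algebra.
From mathcomp Require Import all_classical all_reals all_analysis.
Set Implicit Arguments. Unset Strict Implicit. Unset Printing Implicit Defensive.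
Import Order.TTheory GRing.Theory Num.Theory.
Local Open Scope classical_set_scope.
Local Open Scope ring_scope.

Definition is_orthogonal (R : realType) (n : nat) (A : 'M[R]_n) : Prop :=
  A *m A^T = 1%:M.

Definition mx_of_tuple (R : realType) (n : nat) (t : (n * n).-tuple R)
  : 'M[R]_n :=
  \matrix_(i < n, j < n) tnth t (mxvec_index i j).

(* Borel sets of n x n real matrices: the Borel sets of R^(n*n) transported
   through the coordinate identification. *)
Definition mxBorel (R : realType) (n : nat) (B : set 'M[R]_n) : Prop :=
  measurable (@mx_of_tuple R n @^-1` B).

(* G : Omega -> 'M_n is a Haar-distributed random matrix on O(n):
   it is measurable, takes values in O(n), and its law is invariant under
   left multiplication by every orthogonal matrix (the Haar probability
   measure on O(n) is the unique such law). *)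
Definition haar_orthogonal (d : measure_display) (Omega : measurableType d)
  (R : realType) (P : probability Omega R) (n : nat) (G : Omega -> 'M[R]_n)
  : Prop :=
  [/\ forall B, mxBorel B -> measurable (G @^-1` B),
      forall w, is_orthogonal (G w)
    & forall U : 'M[R]_n, is_orthogonal U ->
        forall B, mxBorel B ->
          P (G @^-1` B) = P ((fun w => U *m G w) @^-1` B)].

Definition ul_submx (R : Type) (n p q : nat) (hp : (p <= n)%N) (hq : (q <= n)%N)
  (A : 'M[R]_n) : 'M[R]_(p, q) :=
  \matrix_(i < p, j < q) A (widen_ord hp i) (widen_ord hq j).

(* Main.v *)
Require Import Defs.
From HB Require Import structures.
From mathcomp Require Import all_boot all_order all_algebra.
From mathcomp Require Import all_classical all_reals all_analysis.
From mathcomp Require Import ring lra.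
From mathcomp Require Import fingroup perm.
Set Implicit Arguments. Unset Strict Implicit. Unset Printing Implicit Defensive.
Import Order.TTheory GRing.Theory Num.Theory.
Local Open Scope classical_set_scope.
Local Open Scope ring_scope.

Module TraceCube.
From mathcomp Require Import complex.
Import Order.TTheory GRing.Theory Num.Theory.
Local Open Scope ring_scope.

Lemma trig_mulmx (K : comNzRingType) n (S T : 'M[K]_n) :
  is_trig_mx S -> is_trig_mx T ->
  is_trig_mx (S *m T) /\ forall i, (S *m T) i i = S i i * T i i.
Proof.
move=> /is_trig_mxP hS /is_trig_mxP hT; split.
  apply/is_trig_mxP => i j lij; rewrite mxE big1 // => k _.
  case: (ltnP i k) => [lik|lki]; first by rewrite hS ?mul0r.
  by rewrite hT ?mulr0 //; apply: leq_ltn_trans lki lij.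
move=> i; rewrite mxE (bigD1 i) //= big1 ?addr0 // => k kni.
case: (ltngtP i k) => [lik|lki|eik]; first by rewrite hS ?mul0r.
  by rewrite hT ?mulr0.
by move: kni; rewrite (val_inj eik) eqxx.
Qed.

Lemma char_poly_conj (K : fieldType) n (V A : 'M[K]_n) : V \in unitmx ->
  char_poly (V *m A *m invmx V) = char_poly A.
Proof.
move=> uV; rewrite /char_poly /char_poly_mx.
have -> : 'X%:M - map_mx polyC (V *m A *m invmx V) =
  map_mx polyC V *m ('X%:M - map_mx polyC A) *m map_mx polyC (invmx V).
  rewrite mulmxBr mulmxBl !map_mxM; congr (_ - _).
  by rewrite scalar_mxC -mulmxA -map_mxM mulmxV // map_mx1 mulmx1.
rewrite !det_mulmx mulrAC -det_mulmx -map_mxM mulmxV //.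
by rewrite map_mx1 det1 mul1r.
Qed.

Lemma trace_cube (R : realType) q (A : 'M[R]_q) (lam : 'I_q -> R) :
  char_poly A = \prod_(i < q) ('X - (lam i)%:P) ->
  \tr (A *m A *m A) = \sum_(i < q) lam i ^+ 3.
Proof.
move=> cA.
pose f := real_complex R.
pose B := map_mx f A.
have cB : char_poly B = \prod_(i < q) ('X - (f (lam i))%:P).
  rewrite -map_char_poly cA rmorph_prod; apply: eq_bigr => i _. by rewrite /= map_polyXsubC.
have [|P Pu /allP HP] := @cotrigonalization _ q [:: B].
  by move=> X Y; rewrite !inE => /eqP-> /eqP->.
have /= tT := HP B (mem_head _ _).
have uP := unitarymx_unit Pu.
rewrite /similar_to conjumx // in tT.
set T := P *m B *m invmx P in tT *.
have cT : char_poly T = \prod_(i < q) ('X - (f (lam i))%:P) by rewrite char_poly_conj.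
rewrite char_poly_trig // in cT.
have pe : perm_eq [seq T i i | i <- enum 'I_q] [seq f (lam i) | i <- enum 'I_q].
  apply: prod_XsubC_eq; rewrite !big_map.
  by rewrite -cT.
have e1 : \sum_(i < q) f (lam i) ^+ 3 = \sum_(x <- [seq f (lam i) | i <- enum 'I_q]) x ^+ 3.
  by rewrite big_map enumT.
have e2 : \sum_(i < q) T i i ^+ 3 = \sum_(x <- [seq T i i | i <- enum 'I_q]) x ^+ 3.
  by rewrite big_map enumT.
apply: (fmorph_inj f); rewrite [RHS]rmorph_sum.
rewrite [RHS](eq_bigr (fun i => f (lam i) ^+ 3)); last by move=> i _; rewrite rmorphXn.
rewrite e1 -(perm_big _ pe) -e2.
transitivity (\tr (B *m B *m B)).
  rewrite /B -!map_mxM /mxtrace rmorph_sum; apply: eq_bigr => i _. by rewrite [RHS]mxE.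
transitivity (\tr (invmx P *m (T *m T *m T) *m P)).
  congr (\tr _).
  have hT : forall M N, (P *m M *m invmx P) *m (P *m N *m invmx P) = P *m (M *m N) *m invmx P.
    by move=> M N; rewrite -!mulmxA (mulmxA (invmx P) P) mulVmx // mul1mx.
  rewrite /T !hT !mulmxA mulVmx // mul1mx. exact: (esym (mulmxKV uP _)).
rewrite mxtrace_mulC mulmxA mulmxV // mul1mx.
have [tT2 dT2] := trig_mulmx tT tT.
have [_ dT3] := trig_mulmx tT2 tT.
by rewrite /mxtrace; apply: eq_bigr => i _; rewrite dT3 dT2 !exprSr expr0 mul1r.
Qed.

End TraceCube.

Section Haar.
Context (d : measure_display) (Omega : measurableType d) (R : realType)
  (P : probability Omega R) (n : nat) (G : Omega -> 'M[R]_n).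
Hypothesis HG : haar_orthogonal P G.

Definition tup (M : 'M[R]_n) : (n * n).-tuple R := [tuple mxvec M 0 k | k < n * n].

Lemma mx_of_tupK M : mx_of_tuple (tup M) = M.
Proof. by apply/matrixP => i j; rewrite mxE tnth_mktuple mxvecE. Qed.

Lemma tupK t : tup (mx_of_tuple t) = t.
Proof.
apply: eq_from_tnth => k; rewrite tnth_mktuple.
by case/mxvec_indexP: k => i j; rewrite mxvecE mxE.
Qed.

Lemma tup_mxBorel (A : set ((n * n).-tuple R)) : measurable A -> mxBorel (tup @^-1` A).
Proof.
move=> mA; rewrite /mxBorel.
suff -> : @mx_of_tuple R n @^-1` (tup @^-1` A) = A by [].
by apply/seteqP; split => t /=; rewrite tupK.
Qed.

Lemma mT1 : measurable_fun setT (fun w => tup (G w)).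
Proof.
case: HG => hm _ _ => _ A mA; rewrite setTI.
exact: (hm _ (tup_mxBorel mA)).
Qed.

Lemma mLU (U : 'M[R]_n) :
  measurable_fun setT (fun t : (n * n).-tuple R => tup (U *m mx_of_tuple t)).
Proof.
apply/measurable_fun_tnthP => k.
case/mxvec_indexP: k => i j.
rewrite /comp; under eq_fun do rewrite tnth_mktuple mxvecE mxE.
apply: measurable_sum => l.
under eq_fun do rewrite mxE.
apply: measurable_realfun.measurable_funM; first exact: measurable_cst.
exact: measurable_tnth.
Qed.

Lemma mT2 U : measurable_fun setT (fun w => tup (U *m G w)).
Proof.
have -> : (fun w => tup (U *m G w)) =
  (fun t => tup (U *m mx_of_tuple t)) \o (fun w => tup (G w)).
  by apply/funext => w /=; rewrite mx_of_tupK.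
exact: measurableT_comp (mLU U) mT1.
Qed.

Definition pg (F : 'M[R]_n -> R) :=
  measurable_fun setT (fun t => F (mx_of_tuple t)) /\
  exists c : R, forall A, Defs.is_orthogonal A -> `|F A| <= c.

Definition good (h : Omega -> R) :=
  measurable_fun setT h /\ exists c : R, forall w, `|h w| <= c.

Lemma G_orth w : Defs.is_orthogonal (G w).
Proof. by case: HG. Qed.

Lemma pg_good F : pg F -> good (fun w => F (G w)).
Proof.
move=> [mF [c hc]]; split; last by exists c => w; apply: hc; apply: G_orth.
have -> : (fun w => F (G w)) = (fun t => F (mx_of_tuple t)) \o (fun w => tup (G w)).
  by apply/funext => w /=; rewrite mx_of_tupK.
exact: measurableT_comp mF mT1.
Qed.

Lemma good_int h : good h -> P.-integrable setT (EFin \o h).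
Proof.
move=> [mh [c hc]].
apply: (@le_integrable _ _ _ P setT measurableT (EFin \o h) (EFin \o cst c)).
- exact/measurable_realfun.measurable_EFinP.
- move=> w _ /=; rewrite lee_fin (le_trans (hc w)) //.
  exact: ler_norm.
- exact: finite_measure_integrable_cst.
Qed.

Definition Ex (h : Omega -> R) : R := Rintegral P setT h.

Lemma orthoM (U V : 'M[R]_n) : Defs.is_orthogonal U -> Defs.is_orthogonal V -> Defs.is_orthogonal (U *m V).
Proof.
rewrite /Defs.is_orthogonal => hU hV.
by rewrite trmx_mul mulmxA -(mulmxA U) hV mulmx1 hU.
Qed.

Lemma Ex_inv U (hU : Defs.is_orthogonal U) F (hF : pg F) :
  Ex (fun w => F (G w)) = Ex (fun w => F (U *m G w)).
Proof.
case: (hF) => mF [c hc].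
have gG := pg_good hF.
have gU : good (fun w => F (U *m G w)).
  split; last by exists c => w; apply: hc; apply: orthoM => //; apply: G_orth.
  have -> : (fun w => F (U *m G w)) = (fun t => F (mx_of_tuple t)) \o (fun w => tup (U *m G w)).
    by apply/funext => w /=; rewrite mx_of_tupK.
  exact: measurableT_comp mF (mT2 U).
rewrite /Ex /Rintegral; congr fine.
have mf := proj2 (measurable_realfun.measurable_EFinP _ _) mF.
move: mf; set f := (EFin \o _) => mf.
have e1 : (fun w => (F (G w))%:E) = f \o (fun w => tup (G w)).
  by apply/funext => w; rewrite /f /= mx_of_tupK.
have e2 : (fun w => (F (U *m G w))%:E) = f \o (fun w => tup (U *m G w)).
  by apply/funext => w; rewrite /f /= mx_of_tupK.
rewrite e1 e2.
transitivity (\int[pushforward P (fun w => tup (G w))]_(y in setT) f y)%E.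
  rewrite (integral_pushforward mT1 mf) ?preimage_setT //.
  by rewrite -e1; exact: good_int.
transitivity (\int[pushforward P (fun w => tup (U *m G w))]_(y in setT) f y)%E; last first.
  rewrite (integral_pushforward (mT2 U) mf) ?preimage_setT //.
  by rewrite -e2; exact: good_int.
apply: (eq_measure_integral (pushforward P (fun w => tup (U *m G w)))).
- exact: (mT2 U).
- exact: mT1.
- move=> ? ? B mB _; rewrite /pushforward.
  case: HG => _ _ hinv.
  exact: (hinv U hU (tup @^-1` B) (tup_mxBorel mB)).
Qed.


Lemma good_cst k : good (fun _ => k).
Proof. by split; [exact: measurable_cst | exists `|k|]. Qed.

Lemma good_add f g : good f -> good g -> good (fun w => f w + g w).
Proof.
move=> [mf [c1 h1]] [mg [c2 h2]]; split.
  exact: measurable_realfun.measurable_funD.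
exists (c1 + c2) => w; apply: le_trans (ler_normD _ _) _; exact: lerD.
Qed.

Lemma good_mul f g : good f -> good g -> good (fun w => f w * g w).
Proof.
move=> [mf [c1 h1]] [mg [c2 h2]]; split.
  exact: measurable_realfun.measurable_funM.
exists (c1 * c2) => w; rewrite normrM; exact: ler_pM.
Qed.

Lemma good_opp f : good f -> good (fun w => - f w).
Proof.
move=> gf; have -> : (fun w => - f w) = (fun w => (-1) * f w).
  by apply/funext => w; rewrite mulN1r.
exact: good_mul (good_cst _) gf.
Qed.

Lemma good_sum I (s : seq I) (F : I -> Omega -> R) :
  (forall i, good (F i)) -> good (fun w => \sum_(i <- s) F i w).
Proof.
move=> gF; elim: s => [|i s IH].
  have -> : (fun w : Omega => \sum_(i <- [::]) F i w) = (fun _ => 0).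
    by apply/funext => w; rewrite big_nil.
  exact: good_cst.
have -> : (fun w => \sum_(j <- i :: s) F j w) = (fun w => F i w + \sum_(j <- s) F j w).
  by apply/funext => w; rewrite big_cons.
exact: good_add.
Qed.

Lemma ExD f g : good f -> good g -> Ex (fun w => f w + g w) = Ex f + Ex g.
Proof. by move=> gf gg; rewrite /Ex RintegralD //; exact: good_int. Qed.

Lemma ExZ k f : good f -> Ex (fun w => k * f w) = k * Ex f.
Proof. by move=> gf; rewrite /Ex RintegralZl //; exact: good_int. Qed.

Lemma Ex_cst k : Ex (fun _ => k) = k.
Proof.
rewrite /Ex Rintegral_cst // -[RHS]mulr1; congr (_ * _).
exact: (f_equal fine (probability_setT P)).
Qed.

Lemma ExN f : good f -> Ex (fun w => - f w) = - Ex f.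
Proof.
move=> gf; rewrite -mulN1r -ExZ //; congr Ex; apply/funext => w.
by rewrite mulN1r.
Qed.

Lemma ExB f g : good f -> good g -> Ex (fun w => f w - g w) = Ex f - Ex g.
Proof. by move=> gf gg; rewrite ExD ?ExN //; exact: good_opp. Qed.

Lemma Ex_sum I (s : seq I) (F : I -> Omega -> R) :
  (forall i, good (F i)) ->
  Ex (fun w => \sum_(i <- s) F i w) = \sum_(i <- s) Ex (F i).
Proof.
move=> gF; elim: s => [|i s IH].
  rewrite big_nil; transitivity (Ex (fun _ => 0)); last exact: Ex_cst.
  by congr Ex; apply/funext => w; rewrite big_nil.
rewrite big_cons -IH -ExD; last exact: good_sum.
  by congr Ex; apply/funext => w; rewrite big_cons.
exact: gF.
Qed.

Lemma pg_cst k : pg (fun _ => k).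
Proof. by split; [exact: measurable_cst | exists `|k|]. Qed.

Lemma pg_add F1 F2 : pg F1 -> pg F2 -> pg (fun M => F1 M + F2 M).
Proof.
move=> [mf [c1 h1]] [mg [c2 h2]]; split.
  exact: measurable_realfun.measurable_funD.
exists (c1 + c2) => A hA; apply: le_trans (ler_normD _ _) _; exact: lerD (h1 _ hA) (h2 _ hA).
Qed.

Lemma pg_mul F1 F2 : pg F1 -> pg F2 -> pg (fun M => F1 M * F2 M).
Proof.
move=> [mf [c1 h1]] [mg [c2 h2]]; split.
  exact: measurable_realfun.measurable_funM.
exists (c1 * c2) => A hA; rewrite normrM; exact: ler_pM (h1 _ hA) (h2 _ hA).
Qed.

Lemma pg_sum I (s : seq I) (F : I -> 'M[R]_n -> R) :
  (forall i, pg (F i)) -> pg (fun M => \sum_(i <- s) F i M).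
Proof.
move=> gF; elim: s => [|i s IH].
  have -> : (fun M : 'M[R]_n => \sum_(i <- [::]) F i M) = (fun _ => 0).
    by apply/funext => w; rewrite big_nil.
  exact: pg_cst.
have -> : (fun M => \sum_(j <- i :: s) F j M) = (fun M => F i M + \sum_(j <- s) F j M).
  by apply/funext => w; rewrite big_cons.
exact: pg_add.
Qed.

Lemma orth_entry (A : 'M[R]_n) i j : Defs.is_orthogonal A -> `|A i j| <= 1.
Proof.
move=> hA.
have : A i j ^+ 2 <= 1.
  have e : (A *m A^T) i i = 1 by rewrite hA mxE eqxx.
  rewrite -e mxE (bigD1 j) //= !mxE expr2 lerDl.
  by apply: sumr_ge0 => k _; rewrite mxE -expr2 sqr_ge0.
by move=> h; rewrite ler_norml; apply/andP; split; nra.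
Qed.

Lemma pg_entry i j : pg (fun M => M i j).
Proof.
split; last by exists 1 => A hA; exact: orth_entry.
have -> : (fun t : (n * n).-tuple R => mx_of_tuple t i j) =
  (fun t => tnth t (mxvec_index i j)) by apply/funext => t; rewrite mxE.
exact: measurable_tnth.
Qed.

Lemma pg_entryU (U : 'M[R]_n) i j : pg (fun M => (U *m M) i j).
Proof.
have -> : (fun M => (U *m M) i j) = (fun M => \sum_(k <- index_enum 'I_n) U i k * M k j).
  by apply/funext => M; rewrite mxE.
by apply: pg_sum => k; apply: pg_mul; [exact: pg_cst | exact: pg_entry].
Qed.


Variables (q : nat) (hq : (q <= n)%N).

Definition Xf (M : 'M[R]_n) (a b : 'I_n) : R :=
  \sum_(j < q) M a (widen_ord hq j) * M b (widen_ord hq j).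
Definition x w a b := Xf (G w) a b.

Lemma pg_XfL (L : 'M[R]_n -> 'M[R]_n) a b :
  (forall i j, pg (fun M => L M i j)) -> pg (fun M => Xf (L M) a b).
Proof.
move=> hL; rewrite /Xf; apply: pg_sum => j; exact: pg_mul.
Qed.

Lemma pg_Xf a b : pg (fun M => Xf M a b).
Proof. exact: (@pg_XfL id a b pg_entry). Qed.

Lemma good_x a b : good (fun w => x w a b).
Proof. exact: pg_good (pg_Xf a b). Qed.

Lemma XfC M a b : Xf M a b = Xf M b a.
Proof. by apply: eq_bigr => j _; rewrite mulrC. Qed.

Lemma xC w a b : x w a b = x w b a.
Proof. exact: XfC. Qed.

Lemma orthT (M : 'M[R]_n) : Defs.is_orthogonal M -> M^T *m M = 1%:M.
Proof. by move=> hM; apply: mulmx1C. Qed.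

Lemma XfP (M : 'M[R]_n) a c : Defs.is_orthogonal M ->
  \sum_(b < n) Xf M a b * Xf M b c = Xf M a c.
Proof.
move=> /orthT hM; rewrite /Xf.
pose w := widen_ord hq.
transitivity (\sum_(j < q) \sum_(k < q) M a (w j) * M c (w k) * (M^T *m M) (w j) (w k)).
  under eq_bigr do rewrite big_distrlr /=.
  rewrite exchange_big /=; apply: eq_bigr => j _.
  rewrite exchange_big /=; apply: eq_bigr => k _.
  rewrite mxE mulr_sumr; apply: eq_bigr => b _; rewrite !mxE; ring.
apply: eq_bigr => j _; rewrite hM (bigD1 j) //= big1 ?addr0.
  by rewrite mxE eqxx mulr1.
move=> k kj; rewrite mxE.
have -> : (w j == w k) = false.
  by apply/negbTE; apply: contra kj => /eqP [] e; apply/eqP/val_inj.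
by rewrite mulr0.
Qed.

Lemma xP w a c : \sum_(b < n) x w a b * x w b c = x w a c.
Proof. exact: XfP (G_orth w). Qed.

Lemma XfT (M : 'M[R]_n) : Defs.is_orthogonal M -> \sum_(a < n) Xf M a a = q%:R.
Proof.
move=> /orthT hM; rewrite /Xf exchange_big /=.
transitivity (\sum_(j < q) (1 : R)); last by rewrite sumr_const card_ord.
apply: eq_bigr => j _.
transitivity ((M^T *m M) (widen_ord hq j) (widen_ord hq j)).
  by rewrite mxE; apply: eq_bigr => a _; rewrite mxE.
by rewrite hM mxE eqxx.
Qed.

Lemma xT w : \sum_(a < n) x w a a = q%:R.
Proof. exact: XfT (G_orth w). Qed.


Lemma Ex_ext f g : (forall w, f w = g w) -> Ex f = Ex g.
Proof. by move=> h; congr Ex; apply/funext. Qed.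

Lemma perm_orth (s : 'S_n) : Defs.is_orthogonal (perm_mx s : 'M[R]_n).
Proof. by rewrite /Defs.is_orthogonal tr_perm_mx -perm_mxM mulgV perm_mx1. Qed.

Lemma Xf_perm (s : 'S_n) M a b : Xf (perm_mx s *m M) a b = Xf M (s a) (s b).
Proof. by rewrite -row_permE /Xf; apply: eq_bigr => j _; rewrite !mxE. Qed.

Lemma Ex_perm (s : 'S_n) (F : ('I_n -> 'I_n -> R) -> R) :
  pg (fun M => F (Xf M)) ->
  Ex (fun w => F (x w)) = Ex (fun w => F (fun a b => x w (s a) (s b))).
Proof.
move=> hF; rewrite (Ex_inv (perm_orth s) hF) /x.
apply: Ex_ext => w; congr F; apply/funext => a; apply/funext => b.
exact: Xf_perm.
Qed.

Lemma Ex_perm1 (s : 'S_n) a b :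
  Ex (fun w => x w a b) = Ex (fun w => x w (s a) (s b)).
Proof. exact: (@Ex_perm s (fun X => X a b) (pg_Xf a b)). Qed.

Lemma Ex_perm2 (s : 'S_n) a b c e :
  Ex (fun w => x w a b * x w c e) = Ex (fun w => x w (s a) (s b) * x w (s c) (s e)).
Proof. exact: (@Ex_perm s (fun X => X a b * X c e) (pg_mul (pg_Xf a b) (pg_Xf c e))). Qed.

Lemma Ex_perm3 (s : 'S_n) a b c e f g :
  Ex (fun w => x w a b * x w c e * x w f g) =
  Ex (fun w => x w (s a) (s b) * x w (s c) (s e) * x w (s f) (s g)).
Proof.
exact: (@Ex_perm s (fun X => X a b * X c e * X f g)
  (pg_mul (pg_mul (pg_Xf a b) (pg_Xf c e)) (pg_Xf f g))).
Qed.

Hypothesis hn : (3 <= n)%N.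
Definition i0 : 'I_n := Ordinal (ltn_trans (isT : (0 < 2)%N) hn).
Definition i1 : 'I_n := Ordinal (ltn_trans (isT : (1 < 2)%N) hn).
Definition i2 : 'I_n := Ordinal hn.

Lemma i01 : i0 != i1. Proof. by []. Qed.
Lemma i02 : i0 != i2. Proof. by []. Qed.
Lemma i12 : i1 != i2. Proof. by []. Qed.

Lemma perm1 a : exists s : 'S_n, s a = i0.
Proof. by exists (tperm i0 a); rewrite tpermR. Qed.

Lemma perm2 a b : a != b -> exists s : 'S_n, s a = i0 /\ s b = i1.
Proof.
move=> ab.
pose b' := tperm i0 a b.
have hb' : b' != i0.
  by rewrite /b' -{2}(tpermR i0 a) (inj_eq (@perm_inj _ _)) eq_sym.
exists (tperm i0 a * tperm i1 b')%g; rewrite !permM tpermR.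
split; last by rewrite -/b' tpermR.
by rewrite tpermD // eq_sym.
Qed.

Lemma perm3 a b c : a != b -> a != c -> b != c ->
  exists s : 'S_n, [/\ s a = i0, s b = i1 & s c = i2].
Proof.
move=> ab ac bc.
have [s [sa sb]] := perm2 ab.
pose c' := s c.
have c0 : c' != i0 by rewrite /c' -sa (inj_eq (@perm_inj _ _)) eq_sym.
have c1 : c' != i1 by rewrite /c' -sb (inj_eq (@perm_inj _ _)) eq_sym.
exists (s * tperm i2 c')%g; rewrite !permM sa sb -/c' tpermR.
by split => //; rewrite tpermD // eq_sym.
Qed.


Definition E1 := Ex (fun w => x w i0 i0).
Definition A2 := Ex (fun w => x w i0 i0 * x w i0 i0).
Definition B2 := Ex (fun w => x w i0 i1 * x w i0 i1).
Definition C2 := Ex (fun w => x w i0 i0 * x w i1 i1).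
Definition M1 := Ex (fun w => x w i0 i0 * x w i0 i0 * x w i0 i0).
Definition M2 := Ex (fun w => x w i0 i0 * x w i0 i1 * x w i0 i1).
Definition M3 := Ex (fun w => x w i0 i1 * x w i1 i2 * x w i2 i0).
Definition E3 := Ex (fun w => x w i0 i0 * x w i0 i0 * x w i1 i1).

Lemma patE1 a : Ex (fun w => x w a a) = E1.
Proof. by have [s sa] := perm1 a; rewrite (Ex_perm1 s) sa. Qed.

Lemma patA2 a : Ex (fun w => x w a a * x w a a) = A2.
Proof. by have [s sa] := perm1 a; rewrite (Ex_perm2 s) sa. Qed.

Lemma patB2 a b : a != b -> Ex (fun w => x w a b * x w b a) = B2.
Proof.
move=> ab; have [s [sa sb]] := perm2 ab; rewrite (Ex_perm2 s) sa sb.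
by apply: Ex_ext => w; rewrite (xC w i1 i0).
Qed.

Lemma patC2 a b : a != b -> Ex (fun w => x w a a * x w b b) = C2.
Proof. by move=> ab; have [s [sa sb]] := perm2 ab; rewrite (Ex_perm2 s) sa sb. Qed.

Lemma patM1 a : Ex (fun w => x w a a * x w a a * x w a a) = M1.
Proof. by have [s sa] := perm1 a; rewrite (Ex_perm3 s) sa. Qed.

Lemma patE3 a b : a != b -> Ex (fun w => x w a a * x w a a * x w b b) = E3.
Proof. by move=> ab; have [s [sa sb]] := perm2 ab; rewrite (Ex_perm3 s) sa sb. Qed.

Lemma patM2 a b : a != b -> Ex (fun w => x w a a * x w a b * x w b a) = M2.
Proof.
move=> ab; have [s [sa sb]] := perm2 ab; rewrite (Ex_perm3 s) sa sb.
by apply: Ex_ext => w; rewrite (xC w i1 i0).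
Qed.

Lemma patM3 a b c : a != b -> a != c -> b != c ->
  Ex (fun w => x w a b * x w b c * x w c a) = M3.
Proof.
move=> ab ac bc; have [s [sa sb sc]] := perm3 ab ac bc.
by rewrite (Ex_perm3 s) sa sb sc.
Qed.

Lemma sum_ind N (i : 'I_N) (k : R) : \sum_(j < N) (j == i)%:R * k = k.
Proof.
rewrite (bigD1 i) //= eqxx mul1r big1 ?addr0 // => j /negbTE ->.
by rewrite mul0r.
Qed.

Lemma sum_pat1 N (f : 'I_N -> R) i A C :
  f i = A -> (forall j, j != i -> f j = C) -> \sum_j f j = A + (N%:R - 1) * C.
Proof.
move=> fi fj.
transitivity (\sum_(j < N) (C + (j == i)%:R * (A - C))).
  apply: eq_bigr => j _; case: (eqVneq j i) => [->|ne].
    by rewrite fi mul1r addrC subrK.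
  by rewrite fj // mul0r addr0.
rewrite big_split /= sum_ind sumr_const card_ord -mulr_natl; ring.
Qed.

Lemma sum_pat2 N (f : 'I_N -> R) i j A B C : i != j ->
  f i = A -> f j = B -> (forall k, k != i -> k != j -> f k = C) ->
  \sum_k f k = A + B + (N%:R - 2) * C.
Proof.
move=> ij fi fj fk.
transitivity (\sum_(k < N) (C + (k == i)%:R * (A - C) + (k == j)%:R * (B - C))).
  apply: eq_bigr => k _; case: (eqVneq k i) => [->|ni].
    by rewrite fi (negbTE ij) mul1r mul0r addr0 addrC subrK.
  case: (eqVneq k j) => [->|nj].
    by rewrite fj mul1r mul0r addr0 addrC subrK.
  by rewrite fk // !mul0r !addr0.
rewrite !big_split /= !sum_ind sumr_const card_ord -mulr_natl; ring.
Qed.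

Lemma good_x2 a b c e : good (fun w => x w a b * x w c e).
Proof. exact: good_mul (good_x _ _) (good_x _ _). Qed.

Lemma good_x3 a b c e f g : good (fun w => x w a b * x w c e * x w f g).
Proof. exact: good_mul (good_x2 _ _ _ _) (good_x _ _). Qed.

Lemma eqD1 : n%:R * E1 = q%:R.
Proof.
transitivity (Ex (fun w => \sum_(a < n) x w a a)).
  rewrite Ex_sum; last by move=> a; exact: good_x.
  by rewrite (eq_bigr (fun _ => E1)) ?sumr_const ?card_ord ?mulr_natl // => a _; exact: patE1.
by rewrite -(Ex_cst q%:R); apply: Ex_ext => w; rewrite xT.
Qed.

Lemma eqI : E1 = A2 + (n%:R - 1) * B2.
Proof.
transitivity (Ex (fun w => \sum_(b < n) x w i0 b * x w b i0)).
  by apply: Ex_ext => w; rewrite xP.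
rewrite Ex_sum; last by move=> b; exact: good_x2.
apply: (sum_pat1 (i := i0)) => // b bi.
by apply: patB2; rewrite eq_sym.
Qed.

Lemma eqII : q%:R * E1 = A2 + (n%:R - 1) * C2.
Proof.
rewrite /E1 -ExZ; last exact: good_x.
transitivity (Ex (fun w => \sum_(c < n) x w i0 i0 * x w c c)).
  by apply: Ex_ext => w; rewrite -mulr_sumr xT mulrC.
rewrite Ex_sum; last by move=> b; exact: good_x2.
apply: (sum_pat1 (i := i0)) => // b bi.
by apply: patC2; rewrite eq_sym.
Qed.

Lemma eq1 : q%:R * A2 = M1 + (n%:R - 1) * E3.
Proof.
rewrite /A2 -ExZ; last exact: good_x2.
transitivity (Ex (fun w => \sum_(c < n) x w i0 i0 * x w i0 i0 * x w c c)).
  by apply: Ex_ext => w; rewrite -mulr_sumr xT mulrC.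
rewrite Ex_sum; last by move=> b; exact: good_x3.
apply: (sum_pat1 (i := i0)) => // b bi.
by apply: patE3; rewrite eq_sym.
Qed.

Lemma eq4 : A2 = M1 + (n%:R - 1) * M2.
Proof.
transitivity (Ex (fun w => \sum_(b < n) x w i0 i0 * x w i0 b * x w b i0)).
  apply: Ex_ext => w; rewrite -{2}(xP w i0 i0) mulr_sumr.
  by apply: eq_bigr => b _; rewrite mulrA.
rewrite Ex_sum; last by move=> b; exact: good_x3.
apply: (sum_pat1 (i := i0)) => // b bi.
by apply: patM2; rewrite eq_sym.
Qed.

Lemma eq5 : B2 = M2 + M2 + (n%:R - 2) * M3.
Proof.
transitivity (Ex (fun w => \sum_(b < n) x w i0 i1 * x w i0 b * x w b i1)).
  apply: Ex_ext => w; rewrite -{2}(xP w i0 i1) mulr_sumr.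
  by apply: eq_bigr => b _; rewrite mulrA.
rewrite Ex_sum; last by move=> b; exact: good_x3.
apply: (sum_pat2 (i := i0) (j := i1)) => //.
- rewrite -(patM2 i01); apply: Ex_ext => w; rewrite (xC w i1 i0); ring.
- rewrite -(@patM2 i1 i0) //; apply: Ex_ext => w; rewrite (xC w i1 i0); ring.
- move=> b b0 b1; rewrite -(@patM3 i1 i0 b); last 3 first.
  + by rewrite eq_sym.
  + by rewrite eq_sym.
  + by rewrite eq_sym.
  by apply: Ex_ext => w; rewrite (xC w i1 i0).
Qed.


Definition sg (i : 'I_n) : R := if i == i0 then -1 else 1.
Definition Dm : 'M[R]_n := diag_mx (\row_i sg i).

Lemma sg2 i : sg i * sg i = 1.
Proof. by rewrite /sg; case: (i == i0); rewrite ?mulrNN mulr1. Qed.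

Lemma Dm_orth : Defs.is_orthogonal Dm.
Proof.
rewrite /Defs.is_orthogonal /Dm tr_diag_mx mul_diag_mx; apply/matrixP => i j.
rewrite !mxE; case: (eqVneq i j) => [->|nij]; first by rewrite mulr1n sg2.
by rewrite mulr0n mulr0.
Qed.

Lemma Xf_flip M a b : Xf (Dm *m M) a b = sg a * sg b * Xf M a b.
Proof.
rewrite /Xf mulr_sumr; apply: eq_bigr => j _; rewrite /Dm mul_diag_mx !mxE; ring.
Qed.

Lemma Ex_odd (F : ('I_n -> 'I_n -> R) -> R) :
  pg (fun M => F (Xf M)) ->
  (forall X, F (fun a b => sg a * sg b * X a b) = - F X) ->
  Ex (fun w => F (x w)) = 0.
Proof.
move=> hF hodd.
have e := Ex_inv Dm_orth hF.
have e2 : Ex (fun w => F (Xf (Dm *m G w))) = - Ex (fun w => F (x w)).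
  rewrite -ExN; last exact: pg_good hF.
  apply: Ex_ext => w; rewrite -hodd /x; congr F.
  by apply/funext => a; apply/funext => b; rewrite Xf_flip.
rewrite /x in e2 *; move: e; rewrite e2 => e; lra.
Qed.

Lemma Ex_odd2 a b c e : sg a * sg b * (sg c * sg e) = -1 ->
  Ex (fun w => x w a b * x w c e) = 0.
Proof.
move=> h; apply: (@Ex_odd (fun X => X a b * X c e)).
  exact: pg_mul (pg_Xf _ _) (pg_Xf _ _).
by move=> X; rewrite -[RHS]mul1r -(opprK 1) -h; ring.
Qed.

Lemma Ex_odd3 a b c e f g : sg a * sg b * (sg c * sg e) * (sg f * sg g) = -1 ->
  Ex (fun w => x w a b * x w c e * x w f g) = 0.
Proof.
move=> h; apply: (@Ex_odd (fun X => X a b * X c e * X f g)).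
  exact: pg_mul (pg_mul (pg_Xf _ _) (pg_Xf _ _)) (pg_Xf _ _).
by move=> X; rewrite -[RHS]mul1r -(opprK 1) -h; ring.
Qed.

Lemma sg0 : sg i0 = -1. Proof. by rewrite /sg eqxx. Qed.
Lemma sg1 : sg i1 = 1. Proof. by rewrite /sg. Qed.


Definition cc : R := 3%:R / 5%:R.
Definition ss : R := 4%:R / 5%:R.

Lemma ccss : cc * cc + ss * ss = 1.
Proof. by rewrite /cc /ss; field; rewrite ?pnatr_eq0. Qed.

Definition Rm : 'M[R]_n := \matrix_(i, j)
  (if i == i0 then cc * (j == i0)%:R - ss * (j == i1)%:R
   else if i == i1 then ss * (j == i0)%:R + cc * (j == i1)%:R
   else (i == j)%:R).

Lemma sum_indf N (i : 'I_N) (f : 'I_N -> R) : \sum_(j < N) (j == i)%:R * f j = f i.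
Proof.
rewrite (bigD1 i) //= eqxx mul1r big1 ?addr0 // => j /negbTE ->.
by rewrite mul0r.
Qed.

Lemma Rm_row i (g : 'I_n -> R) : \sum_j Rm i j * g j =
  if i == i0 then cc * g i0 - ss * g i1
  else if i == i1 then ss * g i0 + cc * g i1 else g i.
Proof.
under eq_bigr do rewrite mxE.
case: ifP => _.
  transitivity (\sum_j ((j == i0)%:R * (cc * g j) - (j == i1)%:R * (ss * g j))).
    by apply: eq_bigr => j _; ring.
  by rewrite sumrB !sum_indf.
case: ifP => _.
  transitivity (\sum_j ((j == i0)%:R * (ss * g j) + (j == i1)%:R * (cc * g j))).
    by apply: eq_bigr => j _; ring.
  by rewrite big_split /= !sum_indf.
by rewrite -(sum_indf i g); apply: eq_bigr => j _; rewrite eq_sym.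
Qed.

Lemma Rm_orth : Defs.is_orthogonal Rm.
Proof.
rewrite /Defs.is_orthogonal; apply/matrixP => i k.
rewrite mxE (eq_bigr (fun j => Rm i j * Rm k j)); last by move=> j _; rewrite !mxE.
rewrite Rm_row !mxE.
have h10 : (i1 == i0) = false by [].
have h01 : (i0 == i1) = false by [].
have cs := ccss.
case: (eqVneq i i0) => [->|ni0].
  case: (eqVneq k i0) => [e|nk0]; first by rewrite ?e ?eqxx ?h10 ?h01 /=; lra.
  case: (eqVneq k i1) => [e|nk1]; first by rewrite ?e ?eqxx ?h10 ?h01 /=; lra.
  rewrite ?eqxx ?h10 ?h01 ?(negbTE nk0) ?(negbTE nk1) /=. lra.
case: (eqVneq i i1) => [->|ni1].
  case: (eqVneq k i0) => [e|nk0]; first by rewrite ?e ?eqxx ?h10 ?h01 /=; lra.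
  case: (eqVneq k i1) => [e|nk1]; first by rewrite ?e ?eqxx ?h10 ?h01 /=; lra.
  rewrite ?eqxx ?h10 ?h01 ?(negbTE nk0) ?(negbTE nk1) /=. lra.
case: (eqVneq k i0) => [e|nk0].
  rewrite ?e ?eqxx ?h10 ?h01 ?(negbTE ni0) ?(negbTE ni1) /=. lra.
case: (eqVneq k i1) => [e|nk1].
  rewrite ?e ?eqxx ?h10 ?h01 ?(negbTE ni0) ?(negbTE ni1) /=. lra.
by rewrite eq_sym.
Qed.

Lemma Xf_rot M : Xf (Rm *m M) i0 i0 =
  cc * cc * Xf M i0 i0 - 2 * cc * ss * Xf M i0 i1 + ss * ss * Xf M i1 i1.
Proof.
rewrite /Xf.
transitivity (\sum_(j < q) (cc * cc * (M i0 (widen_ord hq j) * M i0 (widen_ord hq j))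
   - 2 * cc * ss * (M i0 (widen_ord hq j) * M i1 (widen_ord hq j))
   + ss * ss * (M i1 (widen_ord hq j) * M i1 (widen_ord hq j)))).
  apply: eq_bigr => j _; rewrite !mxE.
  rewrite (Rm_row i0 (fun k => M k (widen_ord hq j))) eqxx; ring.
by rewrite big_split sumrB /= -!mulr_sumr.
Qed.


Ltac solve_good := repeat first [ apply: good_add | apply: good_mul | apply: good_cst | apply: good_x ].
Ltac lin := repeat (rewrite ExD; [| solve_good | solve_good]); repeat (rewrite ExZ; [| solve_good]).

Lemma eqIII : A2 = C2 + 2 * B2.
Proof.
have e := @Ex_inv _ Rm_orth (fun M => Xf M i0 i0 * Xf M i0 i0) (pg_mul (pg_Xf _ _) (pg_Xf _ _)).
rewrite -/(x _ _ _) in e.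
have : A2 = Ex (fun w =>
   (cc*cc)*(cc*cc) * (x w i0 i0 * x w i0 i0) + (2*cc*ss)*(2*cc*ss) * (x w i0 i1 * x w i0 i1)
 + (ss*ss)*(ss*ss) * (x w i1 i1 * x w i1 i1) + 2*(cc*cc)*(ss*ss) * (x w i0 i0 * x w i1 i1)
 + (-(2*(cc*cc)*(2*cc*ss))) * (x w i0 i0 * x w i0 i1)
 + (-(2*(2*cc*ss)*(ss*ss))) * (x w i0 i1 * x w i1 i1)).
  rewrite /A2 e; apply: Ex_ext => w; rewrite Xf_rot /x; ring.
lin.
rewrite -/A2 -/B2 -/C2 (patA2 i1) (@Ex_odd2 i0 i0 i0 i1); last by rewrite sg0 sg1; ring.
rewrite (@Ex_odd2 i0 i1 i1 i1); last by rewrite sg0 sg1; ring.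
rewrite /cc /ss => h; lra.
Qed.


Lemma eqRot3 : M1 = E3 + 4 * M2.
Proof.
have e := @Ex_inv _ Rm_orth (fun M => Xf M i0 i0 * Xf M i0 i0 * Xf M i0 i0)
  (pg_mul (pg_mul (pg_Xf _ _) (pg_Xf _ _)) (pg_Xf _ _)).
rewrite -/(x _ _ _) in e.
pose al := cc * cc; pose be := - (2 * cc * ss); pose ga := ss * ss.
have : M1 = Ex (fun w =>
   al*al*al * (x w i0 i0 * x w i0 i0 * x w i0 i0)
 + ga*ga*ga * (x w i1 i1 * x w i1 i1 * x w i1 i1)
 + 3*al*al*ga * (x w i0 i0 * x w i0 i0 * x w i1 i1)
 + 3*al*ga*ga * (x w i1 i1 * x w i1 i1 * x w i0 i0)
 + 3*al*be*be * (x w i0 i0 * x w i0 i1 * x w i0 i1)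
 + 3*ga*be*be * (x w i1 i1 * x w i1 i0 * x w i0 i1)
 + be*be*be * (x w i0 i1 * x w i0 i1 * x w i0 i1)
 + 3*al*al*be * (x w i0 i0 * x w i0 i0 * x w i0 i1)
 + 3*ga*ga*be * (x w i0 i1 * x w i1 i1 * x w i1 i1)
 + 6*al*be*ga * (x w i0 i0 * x w i0 i1 * x w i1 i1)).
  rewrite /M1 e; apply: Ex_ext => w; rewrite Xf_rot /x -/(x w i1 i0) -/(x w i0 i1).
  rewrite (xC w i1 i0) /al /be /ga; ring.
lin.
rewrite -/M1 -/M2 -/E3 (patM1 i1) (@patE3 i1 i0) // (@patM2 i1 i0) //.
rewrite (@Ex_odd3 i0 i1 i0 i1 i0 i1); last by rewrite sg0 sg1; ring.
rewrite (@Ex_odd3 i0 i0 i0 i0 i0 i1); last by rewrite sg0 sg1; ring.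
rewrite (@Ex_odd3 i0 i1 i1 i1 i1 i1); last by rewrite sg0 sg1; ring.
rewrite (@Ex_odd3 i0 i0 i0 i1 i1 i1); last by rewrite sg0 sg1; ring.
rewrite /al /be /ga /cc /ss => h; lra.
Qed.


Variables (p : nat) (hp : (p <= n)%N).
Let wa := widen_ord hp.

Lemma wne (a b : 'I_p) : (wa a == wa b) = (a == b).
Proof. by apply/eqP/eqP => [/(congr1 val) /= /val_inj|->]. Qed.

Definition Sfun w := \sum_(a < p) \sum_(b < p) \sum_(c < p)
  x w (wa a) (wa b) * x w (wa b) (wa c) * x w (wa c) (wa a).

Lemma good_S : good Sfun.
Proof.
apply: good_sum => a; apply: good_sum => b; apply: good_sum => c.
exact: good_x3.
Qed.

Lemma Ex_S : Ex Sfun =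
  p%:R * (M1 + (p%:R - 1) * M2 + (p%:R - 1) * (M2 + M2 + (p%:R - 2) * M3)).
Proof.
rewrite /Sfun Ex_sum; last first.
  move=> a; apply: good_sum => b; apply: good_sum => c; exact: good_x3.
rewrite (eq_bigr (fun _ => M1 + (p%:R - 1) * M2 + (p%:R - 1) * (M2 + M2 + (p%:R - 2) * M3))).
  by rewrite sumr_const card_ord mulr_natl.
move=> a _; rewrite Ex_sum; last first.
  move=> b; apply: good_sum => c; exact: good_x3.
apply: (sum_pat1 (i := a)).
  rewrite Ex_sum; last by move=> c; exact: good_x3.
  apply: (sum_pat1 (i := a)); first exact: patM1.
  by move=> c ca; apply: patM2; rewrite wne eq_sym.
move=> b ba; rewrite Ex_sum; last by move=> c; exact: good_x3.
have ab : wa a != wa b by rewrite wne eq_sym.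
apply: (sum_pat2 (i := a) (j := b)); first by rewrite eq_sym.
- rewrite -(patM2 ab); apply: Ex_ext => w; ring.
- rewrite -(@patM2 (wa b) (wa a)); last by rewrite eq_sym.
  apply: Ex_ext => w; ring.
- move=> c ca cb; apply: patM3 => //; rewrite wne eq_sym //.
Qed.


Lemma Ex_S_formula : Ex Sfun =
   p%:R * q%:R / (n%:R * (n%:R + 2) * (n%:R + 4))
       * (p%:R ^+ 2 + q%:R ^+ 2 + 3 * p%:R * q%:R + 3 * (p%:R + q%:R) + 4)
     + p%:R * q%:R * (p%:R - 1) * (q%:R - 1)
         / ((n%:R - 1) * n%:R * (n%:R + 2) * (n%:R + 4))
       * (2 * (p%:R - 2) * (q%:R - 2) / (n%:R - 2) - 3 * (p%:R + q%:R)).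
Proof.
have n3 : (3 : R) <= n%:R by rewrite (ler_nat R 3 n).
have nz0 : n%:R != 0 :> R by apply/eqP => h; lra.
have nz1 : n%:R - 1 != 0 :> R by apply/eqP => h; lra.
have nz2 : n%:R - 2 != 0 :> R by apply/eqP => h; lra.
have nz3 : n%:R + 2 != 0 :> R by apply/eqP => h; lra.
have nz4 : n%:R + 4 != 0 :> R by apply/eqP => h; lra.
have hE1 : E1 = q%:R / n%:R by rewrite -eqD1; field; rewrite ?nz0 ?nz1 ?nz2 ?nz3 ?nz4.
have hA2' : (n%:R + 2) * A2 = (q%:R + 2) * E1.
  have e1 := eqI; have e2 := eqII; have e3 := eqIII.
  apply/eqP; rewrite -subr_eq0.
  have -> : (n%:R + 2) * A2 - (q%:R + 2) * E1 =
    (n%:R - 1) * (A2 - (C2 + 2 * B2)) + (A2 + (n%:R - 1) * C2 - q%:R * E1)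
    + 2 * (A2 + (n%:R - 1) * B2 - E1) by ring.
  by rewrite -e1 -e2 -e3 !subrr !mulr0 !addr0.
have hA2 : A2 = (q%:R + 2) * E1 / (n%:R + 2) by rewrite -hA2'; field; rewrite ?nz0 ?nz1 ?nz2 ?nz3 ?nz4.
have hB2 : B2 = (E1 - A2) / (n%:R - 1) by rewrite eqI; field; rewrite ?nz0 ?nz1 ?nz2 ?nz3 ?nz4.
have hM2' : (n%:R + 4) * (n%:R - 1) * M2 = (n%:R - q%:R) * A2.
  have e1 := eq1; have e4 := eq4; have e3 := eqRot3.
  apply/eqP; rewrite -subr_eq0.
  have -> : (n%:R + 4) * (n%:R - 1) * M2 - (n%:R - q%:R) * A2 =
    n%:R * (M1 + (n%:R - 1) * M2 - A2) - (M1 + (n%:R - 1) * E3 - q%:R * A2)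
    + (n%:R - 1) * (E3 + 4 * M2 - M1) by ring.
  by rewrite -e1 -e4 -e3 !subrr !mulr0 subrr !addr0.
have hM2 : M2 = (n%:R - q%:R) * A2 / ((n%:R + 4) * (n%:R - 1)).
  by rewrite -hM2'; field; rewrite ?nz0 ?nz1 ?nz2 ?nz3 ?nz4.
have hM1 : M1 = A2 - (n%:R - 1) * M2 by rewrite eq4; ring.
have hM3 : M3 = (B2 - 2 * M2) / (n%:R - 2) by rewrite eq5; field; rewrite ?nz0 ?nz1 ?nz2 ?nz3 ?nz4.
rewrite Ex_S hM1 hM3 hB2 hM2 hA2 hE1.
by field; rewrite ?nz0 ?nz1 ?nz2 ?nz3 ?nz4.
Qed.

End Haar.

Unset Implicit Arguments.

Theorem lemma2p6 (d : measure_display) (Omega : measurableType d)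
  (R : realType) (P : probability Omega R) (n p q : nat)
  (hn : (3 <= n)%N) (hp1 : (1 <= p)%N) (hp : (p <= n)%N)
  (hq1 : (1 <= q)%N) (hq : (q <= n)%N)
  (G : Omega -> 'M[R]_n) (HG : haar_orthogonal P G)
  (lam : Omega -> 'I_q -> R)
  (Hlam : forall w,
     char_poly ((ul_submx hp hq (G w))^T *m ul_submx hp hq (G w))
     = \prod_(i < q) ('X - (lam w i)%:P)) :
  (\int[P]_w (\sum_(i < q) lam w i ^+ 3)%:E =
   ((p%:R * q%:R / (n%:R * (n%:R + 2) * (n%:R + 4))
       * (p%:R ^+ 2 + q%:R ^+ 2 + 3 * p%:R * q%:R + 3 * (p%:R + q%:R) + 4)
     + p%:R * q%:R * (p%:R - 1) * (q%:R - 1)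
         / ((n%:R - 1) * n%:R * (n%:R + 2) * (n%:R + 4))
       * (2 * (p%:R - 2) * (q%:R - 2) / (n%:R - 2) - 3 * (p%:R + q%:R)))
    : R)%:E)%E.
Proof.
have eqw : forall w, \sum_(i < q) lam w i ^+ 3 = Sfun G hq hp w.
  move=> w; rewrite -(TraceCube.trace_cube (Hlam w)).
  set Z := ul_submx hp hq (G w).
  pose W := Z *m Z^T.
  have hW : forall a b, W a b = x G hq w (widen_ord hp a) (widen_ord hp b).
    move=> a b; rewrite /W mxE /x /Xf; apply: eq_bigr => j _; rewrite !mxE.
    by [].
  have -> : Z^T *m Z *m (Z^T *m Z) *m (Z^T *m Z) = Z^T *m (W *m W *m Z).
    by rewrite /W !mulmxA.
  rewrite mxtrace_mulC (_ : W *m W *m Z *m Z^T = W *m W *m W); last by rewrite /W !mulmxA.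
  rewrite /mxtrace /Sfun; apply: eq_bigr => a _.
  rewrite mxE.
  under eq_bigr do rewrite mxE big_distrl /=.
  rewrite exchange_big /=; apply: eq_bigr => b _; apply: eq_bigr => c _.
  by rewrite !hW.
rewrite (eq_integral (fun w => (Sfun G hq hp w)%:E)); last by move=> w _; rewrite eqw.
have hint := good_int P (good_S HG hq hp).
have fin := integrable_fin_num measurableT hint.
rewrite -(fineK fin); congr EFin.
exact: (Ex_S_formula HG hq hn hp).
Qed.
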